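(* Let $F$ be a field of characteristic two and let $(A,\sigma)$ be a totally decomposable central simple $F$-algebra of degree $2^n$ with orthogonal involution. If $n\geqslant2$ and $(A,\sigma)\not\simeq(M_{2^n}(F),t)$, then there exist an element $w\in\mathrm{Sym}(A,\sigma)\setminus(\mathrm{Alt}(A,\sigma)\oplus F)$ and a unit $u\in\mathrm{Alt}(A,\sigma)$ such that $u^2\in F^\times\setminus F^{\times2}$ and $uw=wu$.
   Context: Involutions are of the first kind; $t$ is the transpose involution. $(A,\sigma)$ is totally decomposable if it is isomorphic to a tensor product of quaternion $F$-algebras with involution. $\mathrm{Sym}(A,\sigma)=\{x\mid\sigma(x)=x\}$, $\mathrm{Alt}(A,\sigma)=\{\sigma(x)-x\mid x\in A\}$. *)

(* Defs.v *)
From HB Require Import structures.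
From mathcomp Require Import all_boot all_order all_algebra all_field.
Set Implicit Arguments.
Unset Strict Implicit.
Unset Printing Implicit Defensive.
Import GRing.Theory.
Local Open Scope ring_scope.

Section CSA.
Variables (F : fieldType) (A : falgType F).

Definition is_ideal_in (Q I : {vspace A}) : Prop :=
  (I <= Q)%VS /\ (Q * I <= I)%VS /\ (I * Q <= I)%VS.

Definition is_subalg (Q : {vspace A}) : Prop :=
  (1 <= Q)%VS /\ (Q * Q <= Q)%VS.

Definition central_simple_sub (Q : {vspace A}) : Prop :=
  is_subalg Q /\ 'Z(Q)%VS = 1%VS /\
  (forall I : {vspace A}, is_ideal_in Q I -> I = 0%VS \/ I = Q).

Definition central_simple : Prop := central_simple_sub fullv.

Definition degree (d : nat) : Prop := \dim (fullv : {vspace A}) = (d ^ 2)%N.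

Definition involution_first_kind (s : A -> A) : Prop :=
  [/\ forall x y, s (x + y) = s x + s y,
      forall x y, s (x * y) = s y * s x,
      forall x, s (s x) = x &
      forall c : F, s (c%:A) = c%:A].

Definition Sym (s : A -> A) (x : A) : Prop := s x = x.
Definition Alt (s : A -> A) (x : A) : Prop := exists y, x = s y - y.

(* In characteristic 2 an involution of the first kind on a central simple
   algebra is symplectic iff 1 \in Alt(A,s) (Knus-Merkurjev-Rost-Tignol,
   Prop. 2.6); orthogonal = not symplectic. *)
Definition orthogonal_char2 (s : A -> A) : Prop := ~ Alt s 1.

Definition sigma_quaternion_sub (s : A -> A) (Q : {vspace A}) : Prop :=
  central_simple_sub Q /\ \dim Q = 4%N /\ (forall x, x \in Q -> s x \in Q).

(* (A,s) is isomorphic to a tensor product of n quaternion algebras with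
   involution: internally, n s-stable quaternion subalgebras which pairwise
   centralise each other and generate A. *)
Definition totally_decomposable (s : A -> A) (n : nat) : Prop :=
  exists Q : 'I_n -> {vspace A},
    [/\ forall i, sigma_quaternion_sub s (Q i),
        forall i j, i != j -> forall x y, x \in Q i -> y \in Q j -> x * y = y * x &
        agenv (\sum_(i < n) Q i)%VS = fullv].

Definition iso_to_transpose (s : A -> A) (d : nat) : Prop :=
  exists f : A -> 'M[F]_d,
    bijective f /\
    [/\ forall x y, f (x + y) = f x + f y,
        forall (c : F) x, f (c *: x) = c *: f x,
        forall x y, f (x * y) = f x *m f y,
        f 1 = 1%:M &
        forall x, f (s x) = (f x)^T].

End CSA.

(* Main.v *)
Require Import Defs.
From HB Require Import structures.
From mathcomp Require Import all_boot all_order all_algebra all_field.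
From Stdlib Require Import Classical.
From mathcomp Require Import zify.
Set Implicit Arguments.
Unset Strict Implicit.
Unset Printing Implicit Defensive.
Import GRing.Theory.
Local Open Scope ring_scope.

Section Basic.
Variables (F : fieldType) (A : falgType F) (s : A -> A).
Hypothesis ch2 : (2 \in [pchar F])%N.
Hypothesis sinv : involution_first_kind s.

Lemma two0F : (2%:R : F) = 0.
Proof. exact: (pcharf0 ch2). Qed.

Lemma addxxF (c : F) : c + c = 0.
Proof. by rewrite -mulr2n -mulr_natr two0F mulr0. Qed.

Lemma addxx (x : A) : x + x = 0.
Proof. by rewrite -mulr2n -scaler_nat two0F scale0r. Qed.

Lemma oppxx (x : A) : - x = x.
Proof. by apply/eqP; rewrite -subr_eq0 -opprD addxx oppr0. Qed.

Lemma addKx (x y : A) : x + (x + y) = y.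
Proof. by rewrite addrA addxx add0r. Qed.

Lemma sD x y : s (x + y) = s x + s y. Proof. by case: sinv. Qed.
Lemma sM x y : s (x * y) = s y * s x. Proof. by case: sinv. Qed.
Lemma sK x : s (s x) = x. Proof. by case: sinv. Qed.
Lemma sA (c : F) : s (c%:A) = c%:A. Proof. by case: sinv. Qed.
Lemma s1 : s 1 = 1. Proof. by rewrite -(scale1r 1) sA. Qed.
Lemma sZ (c : F) x : s (c *: x) = c *: s x.
Proof. by rewrite -mulr_algl sM sA mulr_algr. Qed.
Lemma s_lin : linear s.
Proof. by move=> c x y; rewrite sD sZ. Qed.

Definition sf : A -> A := s.
HB.instance Definition _ := GRing.isLinear.Build F A A *:%R sf s_lin.
Definition sL : 'End(A) := linfun sf.
Lemma sLE x : sL x = s x. Proof. by rewrite /sL lfunE. Qed.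

Definition tf (x : A) : A := s x + x.
Lemma tf_lin : linear tf.
Proof.
move=> c x y; rewrite /tf sD sZ scalerDr -!addrA; congr (_ + _).
by rewrite addrCA.
Qed.
HB.instance Definition _ := GRing.isLinear.Build F A A *:%R tf tf_lin.
Definition tL : 'End(A) := linfun tf.
Lemma tLE x : tL x = s x + x. Proof. by rewrite /tL lfunE. Qed.

Lemma s_tf x : s (tf x) = tf x.
Proof. by rewrite /tf sD sK addrC. Qed.
Lemma tf_tf x : tf (tf x) = 0.
Proof. by rewrite /tf s_tf addxx. Qed.

Lemma AltE x : Alt s x <-> exists y, x = s y + y.
Proof.
split=> [] [y ->]; exists y; by rewrite ?oppxx // -[y in _ + y]oppxx.
Qed.

Lemma sum_s I (r : seq I) (P : pred I) (f : I -> A) :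
  s (\sum_(i <- r | P i) f i) = \sum_(i <- r | P i) s (f i).
Proof. rewrite -sLE linear_sum; apply: eq_bigr => i _; exact: sLE. Qed.

Definition islin (f : A -> F) := forall (a : F) x y, f (a *: x + y) = a * f x + f y.

Lemma islin0 f : islin f -> f 0 = 0.
Proof. by move=> /(_ 1 0 0) /eqP; rewrite scale1r addr0 mul1r eq_sym -subr_eq0 addrK => /eqP. Qed.
Lemma islinD f : islin f -> forall x y, f (x + y) = f x + f y.
Proof. by move=> Hf x y; have := Hf 1 x y; rewrite scale1r mul1r. Qed.
Lemma islinZ f : islin f -> forall a x, f (a *: x) = a * f x.
Proof. by move=> Hf a x; have := Hf a x 0; rewrite addr0 islin0 // addr0. Qed.
Lemma islinN f : islin f -> forall x, f (- x) = - f x.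
Proof. by move=> Hf x; rewrite -scaleN1r islinZ // mulN1r. Qed.
Lemma islin_sum f : islin f -> forall I (r : seq I) (P : pred I) (g : I -> A),
  f (\sum_(i <- r | P i) g i) = \sum_(i <- r | P i) f (g i).
Proof.
move=> Hf I r P g; elim: r => [|a r IH]; rewrite ?big_nil ?big_cons ?islin0 //.
by case: (P a) => //; rewrite islinD // IH.
Qed.

End Basic.

Section Sep.
Variables (F : fieldType) (A : falgType F).

Lemma sepf (x : A) (W : {vspace A}) : x \notin W ->
  exists f : A -> F, [/\ islin f, f x = 1 & forall y, y \in W -> f y = 0].
Proof.
move=> xW.
have x0 : x != 0 by apply: contraNneq xW => ->; exact: mem0v.
have dx : (<[x]> :&: W = 0)%VS.
  apply/eqP; rewrite -subv0; apply/subvP => y /memv_capP [/vlineP [k ->] Wy].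
  rewrite memv0; have [->|k0] := eqVneq k 0; first by rewrite scale0r.
  by move: xW; rewrite -[x](scalerK k0) memvZ.
pose pi := daddv_pi <[x]> W.
pose X := [tuple x].
exists (fun y => coord X 0 (pi y)); split.
- by move=> a y z; rewrite linearP /= linearP.
- rewrite /pi daddv_pi_id ?memv_line //.
  by rewrite (coord_free (0 : 'I_1)) // seq1_free.
- move=> y Wy.
  have Hy : y \in (<[x]> + W)%VS by apply: (subvP (addvSr _ _)).
  have dx' : (W :&: <[x]> = 0)%VS by rewrite capvC.
  have H := daddv_pi_add dx Hy.
  have H2 := daddv_pi_id dx' Wy.
  rewrite H2 in H.
  have -> : pi y = 0 by rewrite /pi; apply: (addIr y); rewrite H add0r.
  exact: linear0.
Qed.
End Sep.

Lemma AC4 (V : zmodType) (a b c d : V) : a + b + (c + d) = d + a + (c + b).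
Proof. by rewrite (addrC d a) (addrC c b) [RHS]addrACA (addrC d c). Qed.

Lemma AC3 (V : zmodType) (a b c : V) : a + b + c = c + b + a.
Proof. by rewrite addrC -[RHS]addrA (addrC b a). Qed.

Section MU.
Variables (F : fieldType) (A : falgType F).
Hypothesis ch2 : (2 \in [pchar F])%N.

Definition mu_of (e v : A) (a b : bool) : A :=
  if a then (if b then 1 + e else v * e) else (if b then e * v else e).

Lemma mu_rel (e v : A) : e * e = e -> e * v + v * e = v -> v * v = 1 ->
  forall a b c d, mu_of e v a b * mu_of e v c d = if b == c then mu_of e v a d else 0.
Proof.
move=> ee ev vv.
have ax := @addxx F A ch2.
have ac2 : forall x y z : A, x + y = z -> x = z + y.
  by move=> x y z <-; rewrite -addrA ax addr0.
have ve : v * e = v + e * v by apply: ac2; rewrite addrC.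
have eve : e * v * e = 0 by rewrite -mulrA ve mulrDr mulrA ee ax.
have vev : v * e * v = 1 + e by rewrite ve mulrDl vv -mulrA vv mulr1.
have e1e : e * (1 + e) = 0 by rewrite mulrDr mulr1 ee ax.
have e1e' : (1 + e) * e = 0 by rewrite mulrDl mul1r ee ax.
case; case; case; case => /=; rewrite ?mulrA ?ee ?eve ?vev //.
- by rewrite mulrDl mul1r mulrDr mulr1 ee ax addr0.
- by rewrite !mulrDl mul1r eve addr0.
- by rewrite e1e' mul0r.
- by rewrite -mulrA e1e mulr0.
- by rewrite -(mulrA v e e) ee vev.
- by rewrite -mulrA ee.
- by rewrite mulrDr mulr1 eve addr0.
- by rewrite -(mulrA e v v) vv mulr1 ee.
- by rewrite mul0r.
Qed.

End MU.

Section Quat.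
Variables (F : fieldType) (A : falgType F) (s : A -> A).
Hypothesis ch2 : (2 \in [pchar F])%N.
Hypothesis sinv : involution_first_kind s.
Hypothesis horth : ~ Alt s 1.
Variable Q : {vspace A}.
Hypothesis HQ : sigma_quaternion_sub s Q.

Let ax := @addxx F A ch2.
Let ox := @oppxx F A ch2.

Lemma no1 y : s y + y <> 1.
Proof. by move=> H; apply: horth; apply/(AltE s ch2); exists y. Qed.

Lemma Q1 : 1 \in Q.
Proof. by case: HQ => [[[H _] _] _]; rewrite memvE. Qed.
Lemma QM x y : x \in Q -> y \in Q -> x * y \in Q.
Proof. by case: HQ => [[[_ H] _] _] xQ yQ; apply: (subvP H); apply: memv_mul. Qed.
Lemma Qs x : x \in Q -> s x \in Q.
Proof. by case: HQ => _ [_ H]; apply: H. Qed.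
Lemma QZ : 'Z(Q)%VS = 1%VS.
Proof. by case: HQ => [[_ [H _]] _]. Qed.
Lemma Qid I : is_ideal_in Q I -> I = 0%VS \/ I = Q.
Proof. by case: HQ => [[_ [_ H]] _]; apply: H. Qed.
Lemma dimQ : \dim Q = 4%N.
Proof. by case: HQ => _ [H _]. Qed.
Lemma Qtf y : y \in Q -> s y + y \in Q.
Proof. by move=> yQ; rewrite memvD // Qs. Qed.

Definition AltQ := (tL s @: Q)%VS.
Definition SymQ := (Q :&: lker (tL s))%VS.

Lemma memSymQ y : (y \in SymQ) = (y \in Q) && (s y + y == 0).
Proof. by rewrite memv_cap memv_ker (tLE sinv). Qed.

Lemma AltQ_sub : (AltQ <= SymQ)%VS.
Proof.
apply/subvP => _ /memv_imgP [y yQ ->]; rewrite (tLE sinv) memSymQ Qtf //=.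
by have := tf_tf ch2 sinv y; rewrite /tf => ->.
Qed.

Lemma one_SymQ : 1 \in SymQ.
Proof. by rewrite memSymQ Q1 (s1 sinv) /=; apply/eqP; exact: ax. Qed.

Lemma one_AltQ : 1 \notin AltQ.
Proof. by apply/negP => /memv_imgP [y _]; rewrite (tLE sinv) => /esym; apply: no1. Qed.

Lemma dimAltQ_le : (\dim AltQ <= 1)%N.
Proof.
have H := limg_ker_dim (tL s) Q; rewrite dimQ -/AltQ -/SymQ in H.
have lt : (\dim AltQ < \dim SymQ)%N.
  rewrite ltn_neqAle dimvS ?AltQ_sub // andbT; apply/negP => /eqP e.
  have : (SymQ <= AltQ)%VS.
    have := eqEdim AltQ SymQ; rewrite AltQ_sub e leqnn /= => /eqP <-; exact: subvv.
  by move/subvP/(_ 1 one_SymQ); apply/negP; apply: one_AltQ.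
by move: H lt; lia.
Qed.

Lemma AltQ_neq0 : AltQ != 0%VS.
Proof.
apply/negP => /eqP A0.
have sy : forall y, y \in Q -> s y = y.
  move=> y yQ; have : tL s y \in AltQ by apply: memv_img.
  rewrite A0 memv0 (tLE sinv) addr_eq0 ox => /eqP //.
have : (Q <= 'Z(Q))%VS.
  rewrite /center_vspace subv_cap subvv /=; apply/centvsP => x y xQ yQ.
  by rewrite -[x * y]sy ?QM // (sM sinv) !sy.
by rewrite QZ => /dimvS; rewrite dimv1 dimQ.
Qed.

Lemma dimAltQ : \dim AltQ = 1%N.
Proof.
have := dimAltQ_le; have := AltQ_neq0; rewrite -dimv_eq0; case: (\dim AltQ) => [|[|]] //.
Qed.

Lemma dimSymQ : \dim SymQ = 3%N.
Proof.
have H := limg_ker_dim (tL s) Q; rewrite dimQ -/AltQ -/SymQ dimAltQ in H.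
lia.
Qed.

Definition Pv (v : A) := [/\ v != 0, exists2 y0, y0 \in Q & v = s y0 + y0 &
  forall y, y \in Q -> exists c : F, s y + y = c *: v].

Lemma Pv_exists : exists v, Pv v.
Proof.
pose v := vpick AltQ.
have v0 : v != 0 by rewrite vpick0 AltQ_neq0.
have vA : v \in AltQ by apply: memv_pick.
have eA : AltQ = <[v]>%VS.
  apply/eqP; rewrite eq_sym eqEdim -memvE vA dim_vline v0 dimAltQ //.
exists v; split => //.
  by case/memv_imgP: vA => y yQ ->; exists y; rewrite ?(tLE sinv).
move=> y yQ; have : tL s y \in AltQ by apply: memv_img.
by rewrite eA (tLE sinv) => /vlineP.
Qed.

Lemma PvZ v k : Pv v -> k != 0 -> Pv (k *: v).
Proof.
move=> [v0 [y0 y0Q e] H] k0; split.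
- by rewrite scaler_eq0 negb_or k0 v0.
- by exists (k *: y0); rewrite ?memvZ // (sZ sinv) e scalerDr.
- move=> y /H [c ->]; exists (c / k); rewrite scalerA -mulrA mulVf // mulr1 //.
Qed.


Lemma sym_char2 y c v : s y + y = c *: v -> s y = c *: v + y.
Proof. by move=> e; rewrite -e -addrA ax addr0. Qed.

Lemma add_char2 (x y z : A) : x + y = z -> x = z + y.
Proof. by move=> <-; rewrite -addrA ax addr0. Qed.

Section WithV.
Variable v : A.
Hypothesis Hv : Pv v.

Lemma v0 : v != 0. Proof. by case: Hv. Qed.
Lemma vgen : exists2 y0, y0 \in Q & v = s y0 + y0. Proof. by case: Hv. Qed.
Lemma vAlt y : y \in Q -> exists c : F, s y + y = c *: v. Proof. by case: Hv => _ _; apply. Qed.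
Lemma vQ : v \in Q. Proof. by case: vgen => y0 y0Q ->; apply: Qtf. Qed.
Lemma sv : s v = v.
Proof. by case: vgen => y0 _ ->; rewrite (sD sinv) (sK sinv) addrC. Qed.

Lemma star x : x \in Q -> exists l : F, x * v + v * s x = l *: v.
Proof.
move=> xQ; case: vgen => y0 y0Q ev.
have [c1 e1] := vAlt (QM xQ (Qs y0Q)).
have [c2 e2] := vAlt (QM xQ y0Q).
exists (c1 + c2); rewrite scalerDl -e1 -e2 !(sM sinv) (sK sinv) ev.
by rewrite mulrDl mulrDr; apply: AC4.
Qed.

Lemma sandwich x : x \in Q -> exists l : F, x * v * s x = l *: v.
Proof.
move=> xQ; case: vgen => y0 y0Q ev.
have [c e] := vAlt (QM (QM xQ y0Q) (Qs xQ)).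
exists c; rewrite -e !(sM sinv) (sK sinv) ev mulrDr mulrDl !mulrA.
done.
Qed.

Lemma comm_v x : x \in Q -> exists l a : F, x * v + v * x = l *: v + a *: (v * v).
Proof.
move=> xQ; have [l el] := star xQ; have [a ea] := vAlt xQ.
exists l, a; rewrite -el (sym_char2 ea) mulrDr -scalerAr.
by rewrite [a *: _ + _]addrC !addrA -[RHS]addrA (addxx ch2) addr0.
Qed.

Lemma vsq : exists c : F, v * v = c%:A /\ c != 0.
Proof.
have vvZ : v * v \in 'Z(Q)%VS.
  rewrite /center_vspace memv_cap QM ?vQ //=; apply/centvP => x xQ.
  have [l [a e]] := comm_v xQ.
  have e1 : v * x = l *: v + a *: (v * v) + x * v by rewrite -e addrC addKx.
  have e2 : x * v = l *: v + a *: (v * v) + v * x by rewrite -e -addrA (addxx ch2) addr0.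
  have L : v * (v * x) = l *: (v*v) + a *: (v*v*v) + v * x * v.
    by rewrite {1}e1 !mulrDr -!scalerAr !mulrA.
  have R : x * (v * v) = l *: (v*v) + a *: (v*v*v) + v * x * v.
    by rewrite mulrA e2 !mulrDl -!scalerAl.
  by rewrite -mulrA L R.
move: vvZ; rewrite QZ => /vlineP [c ec]; exists c; split; first by rewrite ec.
apply/negP => /eqP c0; rewrite c0 scale0r in ec.
pose I := (Q * <[v]>)%VS.
have memI x : x \in Q -> x * v \in I by move=> xQ; apply: memv_mul; rewrite ?memv_line.
have Iid : is_ideal_in Q I.
  split; [|split].
  - by apply/prodvP => x y xQ /vlineP [k ->]; rewrite -scalerAr memvZ // QM ?vQ.
  - apply/prodvP => x y xQ /memv_cosetP [q qQ ->]; rewrite mulrA; apply: memI.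
    exact: QM.
  - apply/prodvP => y x /memv_cosetP [q qQ ->] xQ.
    have [l el] := star (Qs xQ); rewrite (sK sinv) in el.
    have -> : q * v * x = q * (s x + l%:A) * v.
      by rewrite -!mulrA mulrDl mulr_algl -el addKx.
    by apply: memI; rewrite QM // memvD ?Qs // memvZ ?Q1.
case: (Qid Iid) => HI.
- by have := memI _ Q1; rewrite HI memv0 mul1r (negbTE v0).
- have := Q1; rewrite -HI => /memv_cosetP [q _ e1].
  by move: v0; rewrite -[v]mul1r e1 -mulrA ec mulr0 eqxx.
Qed.


Lemma ac2 (x y z : A) : x + y = z -> x = z + y.
Proof. by move=> <-; rewrite -addrA ax addr0. Qed.

Lemma idealQ_contra (m : A) : m \in Q -> m != 0 -> m * m = 0 ->
  (forall y, y \in Q -> exists2 z, z \in Q & m * y = z * m) -> False.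
Proof.
move=> mQ m0 mm H.
pose I := (Q * <[m]>)%VS.
have memI x : x \in Q -> x * m \in I by move=> xQ; apply: memv_mul; rewrite ?memv_line.
have Iid : is_ideal_in Q I.
  split; [|split].
  - by apply/prodvP => x y xQ /vlineP [k ->]; rewrite -scalerAr memvZ // QM.
  - apply/prodvP => x y xQ /memv_cosetP [q qQ ->]; rewrite mulrA; apply: memI.
    exact: QM.
  - apply/prodvP => y x /memv_cosetP [q qQ ->] xQ.
    have [z zQ ez] := H x xQ.
    by rewrite -mulrA ez mulrA; apply: memI; rewrite QM.
case: (Qid Iid) => HI.
- by have := memI _ Q1; rewrite HI memv0 mul1r (negbTE m0).
- have := Q1; rewrite -HI => /memv_cosetP [q _ e1].
  by move: m0; rewrite -[m]mul1r e1 -mulrA mm mulr0 eqxx.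
Qed.

Hypothesis vv1 : v * v = 1.

Lemma exists_s1 : exists s1, [/\ s1 \in Q, s s1 = s1 & s1 * v + v * s1 = v].
Proof.
have [s0 [s0Q ss0 ns]] : exists s0, [/\ s0 \in Q, s s0 = s0 & s0 * v != v * s0].
  apply: NNPP => Hn.
  have H : forall z, z \in Q -> s z = z -> z * v = v * z.
    move=> z zQ sz; apply/eqP; apply: contraT => nz; exfalso; apply: Hn; exists z; split => //.
  case: vgen => t tQ et.
  have st : s t = v + t by rewrite et -addrA ax addr0.
  pose D := t * v + v * t.
  have F1 : forall y a, y \in Q -> s y + y = a *: v -> y * v + v * y = a *: D.
    move=> y a yQ ey; pose z := y + a *: t.
    have zQ : z \in Q by rewrite memvD // memvZ.
    have sz : s z = z.
      rewrite /z (sD sinv) (sZ sinv) st (ac2 ey) scalerDr addrACA.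
      by rewrite ax add0r.
    have ey' : y = z + a *: t by rewrite /z -addrA ax addr0.
    rewrite ey' mulrDl mulrDr -scalerAl -scalerAr (H z zQ sz) addrACA ax add0r.
    by rewrite scalerDr.
  have [l el] := star tQ.
  have eD : D = l *: v + 1.
    by rewrite -el st mulrDr vv1 /D [1 + _]addrC addrA -[RHS]addrA ax addr0.
  have stv : s (t * v) + t * v = l *: v.
    rewrite (sM sinv) sv st mulrDr vv1 (ac2 (esym eD)) /D.
    by rewrite AC3.
  have e3 := F1 _ _ (QM tQ vQ) stv.
  rewrite -mulrA vv1 mulr1 in e3.
  have tv : t * v = D + v * t by rewrite /D -addrA ax addr0.
  rewrite tv mulrDr mulrA vv1 mul1r addrCA ax addr0 in e3.
  rewrite eD mulrDr mulr1 -scalerAr vv1 scalerDr addrC in e3.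
  move/addIr: e3; rewrite scalerA => e4.
  have l2 : l * l = 1.
    apply/eqP; rewrite -subr_eq0; apply/eqP.
    have : (l * l - 1) *: v = 0 by rewrite scalerBl -e4 scale1r subrr.
    by move/eqP; rewrite scaler_eq0 (negbTE v0) orbF => /eqP.
  have l1 : l = 1.
    have : (l + 1) * (l + 1) = 0.
      by rewrite mulrDl mulrDr l2 mul1r mulr1 [l + 1]addrC (addxxF ch2).
    move/eqP; rewrite mulf_eq0 orbb addr_eq0 => /eqP ->.
    by apply/eqP; rewrite eq_sym -addr_eq0 (addxxF ch2).
  rewrite l1 scale1r in eD.
  pose m := v + 1.
  apply: (@idealQ_contra m).
  - by rewrite memvD ?vQ ?Q1.
  - apply/negP => /eqP m0; apply: (@no1 t); rewrite -et.
    by have := ac2 m0; rewrite add0r.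
  - by rewrite /m mulrDl mul1r mulrDr mulr1 vv1 [v + 1]addrC ax.
  - move=> y yQ; have [a ea] := vAlt yQ.
    exists (y + a%:A); first by rewrite memvD // memvZ ?Q1.
    have e := F1 _ _ yQ ea; rewrite eD in e.
    have vy : v * y = a *: (v + 1) + y * v by rewrite -e [y * v + _]addrC -addrA ax addr0.
    rewrite /m mulrDl mul1r vy mulrDl mulr_algl mulrDr mulr1.
    by rewrite -addrA addrC.
have [l el] := star s0Q; rewrite ss0 in el.
have l0 : l != 0.
  apply: contraNneq ns => l0; rewrite l0 scale0r in el.
  by rewrite -[v * s0]ox -addr_eq0 el.
exists (l^-1 *: s0); split.
- by rewrite memvZ.
- by rewrite (sZ sinv) ss0.
- by rewrite -scalerAl -scalerAr -scalerDr el scalerA mulVf // scale1r.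
Qed.

Lemma exists_mu : exists E : bool -> bool -> A,
  [/\ forall a b, E a b \in Q,
      forall a b c d, E a b * E c d = (if b == c then E a d else 0),
      forall a b, s (E a b) = E b a & E false false + E true true = 1].
Proof.
have [r [rQ sr er]] := exists_s1.
have [k ek] := sandwich rQ; rewrite sr in ek.
have vs1 : v * r = v + r * v by apply: ac2; rewrite addrC.
have e5 : (r + r * r) * v = k *: v.
  by rewrite -ek -(mulrA r v r) vs1 mulrDr mulrDl mulrA.
have e6 : r + r * r = k%:A.
  by have := congr1 (fun x => x * v) e5; rewrite /= -mulrA vv1 mulr1 -scalerAl vv1.
have rr : r * r = k%:A + r by apply: ac2; rewrite addrC.
pose m := 1 + v.
have mm : m * m = 0 by rewrite /m mulrDl mul1r mulrDr mulr1 vv1 [v + 1]addrC ax.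
have rm : r * m + m * r = v.
  by rewrite /m mulrDr mulrDl mulr1 mul1r addrACA ax add0r.
have mv : m * v = v * m by rewrite /m mulrDl mulrDr mul1r mulr1.
pose e := r + k *: m.
have ee : e * e = e.
  rewrite /e mulrDl !mulrDr -!scalerAl -!scalerAr mm !scaler0 addr0.
  rewrite -addrA -scalerDr rm rr /m scalerDr.
  by rewrite [k%:A + r]addrC -addrA.
have ev : e * v + v * e = v.
  rewrite /e mulrDl mulrDr -scalerAl -scalerAr mv addrACA.
  by rewrite [k *: _ + _]ax addr0 er.
have eQ : e \in Q by rewrite memvD // memvZ // memvD ?Q1 ?vQ.
have se : s e = e by rewrite /e (sD sinv) (sZ sinv) sr /m (sD sinv) (s1 sinv) sv.
exists (mu_of e v); split.
- by case; case => /=; [exact: memvD Q1 eQ | exact: QM vQ eQ | exact: QM eQ vQ | exact: eQ].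
- exact: mu_rel.
- by case; case => //=; rewrite ?(sM sinv) ?sv ?se // (sD sinv) (s1 sinv) se.
- by rewrite /= addrCA ax addr0.
Qed.


End WithV.


Lemma quat_dich :
  (exists u y c, [/\ y \in Q, u = s y + y, c != 0, u * u = c%:A & ~ (exists d : F, c = d ^+ 2)]) \/
  (exists E : bool -> bool -> A,
    [/\ forall a b, E a b \in Q,
        forall a b c d, E a b * E c d = (if b == c then E a d else 0),
        forall a b, s (E a b) = E b a & E false false + E true true = 1]).
Proof.
have [v Hv] := Pv_exists.
have [c [vv c0]] := vsq Hv.
case: (classic (exists d : F, c = d ^+ 2)) => [[d cd]|nsq]; last first.
  left; case: (vgen Hv) => y yQ ey; exists v, y, c; split => //.
right.
have d0 : d != 0 by apply: contraNneq c0 => d0; rewrite cd d0 expr0n.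
pose v' := d^-1 *: v.
have Hv' := PvZ Hv (invr_neq0 d0).
have vv' : v' * v' = 1.
  rewrite /v' -scalerAl -scalerAr scalerA vv scalerA cd expr2 mulrACA mulVf //.
  by rewrite mulr1 scale1r.
exact: (exists_mu Hv' vv').
Qed.

Lemma quat_w : exists w (mu : A -> F),
  [/\ w \in Q, s w = w, islin mu, mu w = 1 & mu 1 = 0 /\ forall q, q \in Q -> mu (s q) = mu q].
Proof.
have [v Hv] := Pv_exists.
pose W := (<[v]> + 1)%VS.
have dW : (\dim W <= 2)%N.
  apply: leq_trans (dimv_add_leqif _ _).1 _.
  by rewrite dim_vline dimv1; case: (v != 0).
have nS : ~~ (SymQ <= W)%VS.
  by apply/negP => /dimvS; rewrite dimSymQ => H; have := leq_trans H dW.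
have [w wS wW] := subvPn nS.
have [mu [lmu mw mW]] := sepf wW.
move: wS; rewrite memSymQ => /andP [wQ /eqP sw].
exists w, mu; split => //.
- by rewrite (ac2 sw) add0r.
- split; first by apply: mW; apply: (subvP (addvSr _ _)); apply: memv_line.
  move=> q qQ; have [c ec] := vAlt Hv qQ.
  rewrite (sym_char2 ec) (islinD lmu) (mW (c *: v)) ?add0r //.
  by apply: (subvP (addvSl _ _)); rewrite memvZ ?memv_line.
Qed.

End Quat.

Section Bilin.
Variables (F : fieldType) (A : falgType F).

Lemma prodvE (U V : {vspace A}) :
  (U * V)%VS = <<[seq (x * y)%R | x <- vbasis U, y <- vbasis V]>>%VS.
Proof. by rewrite unlock. Qed.

Lemma prodv_ext (U V : {vspace A}) (f g : A -> F) : islin f -> islin g ->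
  (forall a b, a \in U -> b \in V -> f (a * b) = g (a * b)) ->
  forall x, x \in (U * V)%VS -> f x = g x.
Proof.
move=> lf lg H x; rewrite prodvE => xZ.
set Z := [seq (x * y)%R | x <- vbasis U, y <- vbasis V] in xZ.
have := coord_span (X := in_tuple Z) xZ => ->.
rewrite (islin_sum lf) (islin_sum lg); apply: eq_bigr => k _.
rewrite (islinZ lf) (islinZ lg); congr (_ * _).
have : (in_tuple Z)`_k \in Z by apply: mem_nth; exact: ltn_ord.
by case/allpairsP => [[a b] /= [aU bV ->]]; apply: H; apply: vbasis_mem.
Qed.

Lemma bilin (U V : {vspace A}) (mu ka : A -> F) : islin mu -> islin ka ->
  \dim (U * V) = (\dim U * \dim V)%N ->
  exists la : A -> F, islin la /\
    forall u v, u \in U -> v \in V -> la (u * v) = mu u * ka v.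
Proof.
move=> lmu lka dUV.
pose X := vbasis U; pose Y := vbasis V.
pose P := [seq (x, y) | x <- X, y <- Y].
pose Z := [seq x * y | x <- X, y <- Y].
have eZ : Z = map (fun p => p.1 * p.2) P by rewrite /P map_allpairs.
have sZ : size Z = (\dim U * \dim V)%N by rewrite size_allpairs !size_tuple.
have sP : size P = size Z by rewrite eZ size_map.
have bZ : basis_of (U * V) Z.
  by rewrite basisEdim sZ dUV leqnn andbT prodvE subvv.
have fZ : free (in_tuple Z) by apply: basis_free bZ.
pose beta (k : nat) := mu (nth (0, 0) P k).1 * ka (nth (0, 0) P k).2.
pose la x := \sum_(k < size Z) coord (in_tuple Z) k x * beta k.
have lla : islin la.
  move=> a x y; rewrite /la mulr_sumr -big_split; apply: eq_bigr => k _ /=.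
  by rewrite linearP /= mulrDl -mulrA.
have laZ (k : 'I_(size Z)) : la ((in_tuple Z)`_k) = beta k.
  rewrite /la (bigD1 k) //= coord_free // eqxx mul1r big1 ?addr0 // => i ik.
  by rewrite coord_free // eq_sym (negbTE ik) mul0r.
have laXY a b : a \in X -> b \in Y -> la (a * b) = mu a * ka b.
  move=> aX bY.
  have pP : (a, b) \in P by apply: allpairs_f.
  have kP : (index (a, b) P < size Z)%N by move: pP; rewrite -index_mem sP.
  have -> : a * b = (in_tuple Z)`_(Ordinal kP).
    by rewrite /= eZ (nth_map (0, 0)) ?nth_index ?index_mem.
  by rewrite laZ /beta nth_index.
exists la; split => // u v uU vV.
have -> : u * v = \sum_(i < \dim U) \sum_(j < \dim V)
    (coord X i u * coord Y j v) *: (X`_i * Y`_j).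
  rewrite {1}(coord_vbasis uU) {1}(coord_vbasis vV) -/X -/Y mulr_suml.
  apply: eq_bigr => i _; rewrite mulr_sumr; apply: eq_bigr => j _.
  by rewrite -scalerAl -scalerAr scalerA.
rewrite {2}(coord_vbasis uU) {2}(coord_vbasis vV) -/X -/Y.
rewrite (islin_sum lmu) (islin_sum lka) mulr_suml (islin_sum lla).
apply: eq_bigr => i _; rewrite mulr_sumr (islin_sum lla); apply: eq_bigr => j _.
rewrite (islinZ lla) (islinZ lmu) (islinZ lka) laXY ?mem_nth ?size_tuple //.
by rewrite mulrACA.
Qed.

End Bilin.

Section Prod.
Variables (F : fieldType) (A : falgType F) (s : A -> A).
Hypothesis sinv : involution_first_kind s.
Variable n : nat.
Variable Q : 'I_n -> {vspace A}.
Hypothesis HQ : forall i, sigma_quaternion_sub s (Q i).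
Hypothesis Hc : forall i j, i != j -> forall x y, x \in Q i -> y \in Q j -> x * y = y * x.

Definition stab (X : {vspace A}) := forall x, x \in X -> s x \in X.

Lemma stab_prod U V : stab U -> stab V -> (V * U <= U * V)%VS -> stab (U * V).
Proof.
move=> sU sV VU.
have H : (sL s @: (U * V) <= U * V)%VS.
  rewrite {1}prodvE limg_span; apply/span_subvP => z /mapP [y].
  case/allpairsP => [[a b] /= [aU bV ->]] ->.
  rewrite (sLE sinv) (sM sinv); apply: (subvP VU); apply: memv_mul.
    by apply: sV; apply: vbasis_mem.
  by apply: sU; apply: vbasis_mem.
move=> x xUV; rewrite -(sLE sinv); apply: (subvP H); exact: memv_img.
Qed.

Lemma stab1 : stab 1%VS.
Proof.
by move=> x /vlineP [k ->]; rewrite (sZ sinv) (s1 sinv) memvZ ?memv_line.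
Qed.

Lemma HQ1 i : 1 \in Q i. Proof. by case: (HQ i) => [[[H _] _] _]; rewrite memvE. Qed.
Lemma HQM i : (Q i * Q i <= Q i)%VS. Proof. by case: (HQ i) => [[[_ H] _] _]. Qed.
Lemma HQs i : stab (Q i). Proof. by case: (HQ i) => _ [_ H]. Qed.
Lemma HQd i : \dim (Q i) = 4%N. Proof. by case: (HQ i) => _ [H _]. Qed.

Lemma Qcent i l : i != l -> (Q i <= 'C(Q l))%VS.
Proof. by move=> il; apply/centvsP => x y xQ yQ; apply: Hc il _ _ xQ yQ. Qed.

Lemma prod_props (r : seq 'I_n) (P : pred 'I_n) : uniq r ->
  let X := (\big[@prodv _ A/1%VS]_(k <- r | P k) Q k)%VS in
  [/\ 1 \in X, (X * X <= X)%VS, stab X,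
      (forall l, l \notin r -> (X <= 'C(Q l))%VS) /\
      (forall k, k \in r -> P k -> (Q k <= X)%VS) & (\dim X <= 4 ^ count P r)%N].
Proof.
elim: r => [|a r IH] /=.
  rewrite big_nil; split => //.
  - exact: memv_line.
  - by rewrite prodv1.
  - exact: stab1.
  - by split => // l _; rewrite -memvE centv1.
  - by rewrite dimv1.
case/andP => ar ur; have [X1 XX sX [XC QX] dX] := IH ur.
set X := (\big[@prodv _ A/1%VS]_(k <- r | P k) Q k)%VS in X1 XX sX XC QX dX *.
rewrite big_cons; case: ifP => Pa.
  have XQ : (X * Q a <= Q a * X)%VS.
    apply/prodvP => x q xX qQ.
    have := XC a ar; move/centvsP => /(_ x q xX qQ) ->.
    exact: memv_mul.
  split.
  - by have := memv_mul (HQ1 a) X1; rewrite mulr1.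
  - rewrite !prodvA.
    have h1 : (Q a * X * Q a <= Q a * X)%VS.
      rewrite -prodvA (subv_trans (prodvSr _ XQ)) // prodvA prodvSl //.
      exact: HQM.
    apply: subv_trans (prodvSl X h1) _.
    by rewrite -prodvA prodvSr.
  - by apply: stab_prod => //; exact: HQs.
  - split.
    move=> l; rewrite inE negb_or => /andP [la lr].
    apply: (@prodv_sub _ _ _ _ 'C(Q l)%AS); last exact: XC.
    by apply: Qcent; rewrite eq_sym.
    move=> k; rewrite inE => /orP [/eqP -> _|kr Pk].
      by rewrite -{1}[Q a]prodv1 prodvSr // -memvE.
    by rewrite (subv_trans (QX k kr Pk)) // -{1}[X]prod1v prodvSl // -memvE HQ1.
  - rewrite add1n expnS; apply: leq_trans (dim_prodv _ _) _.
    by rewrite HQd leq_mul2l.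
split => //.
- split; first by move=> l; rewrite inE negb_or => /andP [_ lr]; exact: XC.
  move=> k; rewrite inE => /orP [/eqP -> |kr Pk]; first by rewrite Pa.
  exact: QX.
Qed.


Lemma caseA_split (j : 'I_n) : agenv (\sum_(i < n) Q i)%VS = fullv ->
  \dim (fullv : {vspace A}) = (4 ^ n)%N ->
  exists C : {vspace A},
    [/\ 1 \in C, stab C, (C <= 'C(Q j))%VS, (Q j * C)%VS = fullv & \dim (Q j * C) = (\dim (Q j) * \dim C)%N].
Proof.
move=> gen dA.
pose r' := filter (predC1 j) (enum 'I_n).
have ur' : uniq r' by rewrite filter_uniq ?enum_uniq.
have jr' : j \notin r' by rewrite mem_filter /= eqxx.
have [C1 CC sC [CC' QC] dC] := prod_props predT ur'.
set C := (\big[@prodv _ A/1%VS]_(k <- r' | predT k) Q k)%VS in C1 CC sC CC' QC dC.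
have ur : uniq (j :: r') by rewrite /= jr' ur'.
have [X1 XX _ [_ QX] _] := prod_props predT ur.
rewrite big_cons /= -/C in X1 XX QX.
have full : (Q j * C)%VS = fullv.
  apply/eqP; rewrite eqEdim subvf /= -{1}gen dimvS //.
  apply: agenv_sub_modl; first by rewrite -memvE.
  apply: subv_trans (prodvSl _ _) XX.
  apply/subv_sumP => i _; apply: QX => //.
  by rewrite inE /r' mem_filter mem_enum andbT /=; case: eqP.
exists C; split => //; first exact: CC'.
have sr : size r' = n.-1.
  rewrite size_filter.
  have h0 := count_predC (pred1 j) (enum 'I_n).
  rewrite count_uniq_mem ?enum_uniq // mem_enum size_enum_ord in h0.
  have h : (1 + count (predC1 j) (enum 'I_n) = n)%N by exact: h0.
  lia.
rewrite count_predT sr in dC.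
have n0 : (0 < n)%N by apply: leq_ltn_trans (leq0n j) (ltn_ord j).
have e4 : (4 ^ n = 4 * 4 ^ n.-1)%N by rewrite -expnS prednK.
have e1 : \dim (Q j * C) = (4 * 4 ^ n.-1)%N by rewrite full dA e4.
have h := dim_prodv (Q j) C; rewrite HQd in h; rewrite HQd.
apply/eqP; rewrite eqn_leq h /= e1 leq_mul2l dC orbT //.
Qed.

End Prod.

Section Glue.
Variables (F : fieldType) (A : falgType F) (s : A -> A).
Hypothesis sinv : involution_first_kind s.

Definition msys (I : finType) (E : I -> I -> A) :=
  [/\ forall i j k l, E i j * E k l = (if j == k then E i l else 0),
      forall i j, s (E i j) = E j i & \sum_i E i i = 1].

Lemma msys_glue (I : finType) (E : I -> I -> A) (e : bool -> bool -> A) : msys E ->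
  (forall a b c d, e a b * e c d = (if b == c then e a d else 0)) ->
  (forall a b, s (e a b) = e b a) -> e false false + e true true = 1 ->
  (forall i j a b, E i j * e a b = e a b * E i j) ->
  msys (fun p q : I * bool => E p.1 q.1 * e p.2 q.2).
Proof.
move=> [ER Es Esum] eR es esum com; split.
- move=> [i a] [j b] [k c] [l d] /=.
  have -> : E i j * e a b * (E k l * e c d) = (E i j * E k l) * (e a b * e c d).
    by rewrite -mulrA (mulrA (e a b)) -com -mulrA !mulrA.
  rewrite ER eR xpair_eqE.
  by case: (j == k); case: (b == c); rewrite /= ?mul0r ?mulr0.
- by move=> [i a] [j b] /=; rewrite (sM sinv) Es es com.
- rewrite -(pair_big xpredT xpredT (fun i b => E i i * e b b)) /=.
  rewrite -[RHS]Esum; apply: eq_bigr => i _.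
  by rewrite big_bool /= -mulrDr addrC esum mulr1.
Qed.

End Glue.

Section GlueQ.
Variables (F : fieldType) (A : falgType F) (s : A -> A).
Hypothesis sinv : involution_first_kind s.
Variable n : nat.
Variable Q : 'I_n -> {vspace A}.
Hypothesis Hc : forall i j, i != j -> forall x y, x \in Q i -> y \in Q j -> x * y = y * x.
Hypothesis HE : forall i : 'I_n, exists e : bool -> bool -> A,
    [/\ forall a b, e a b \in Q i,
        forall a b c d, e a b * e c d = (if b == c then e a d else 0),
        forall a b, s (e a b) = e b a & e false false + e true true = 1].

Lemma glue_all k : (k <= n)%N -> exists (I : finType) (E : I -> I -> A),
  [/\ #|I| = (2 ^ k)%N, msys s E &
      forall i j (l : 'I_n), (k <= l)%N -> forall q, q \in Q l -> E i j * q = q * E i j].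
Proof.
elim: k => [_|k IH kn].
  exists unit, (fun _ _ => 1); split.
  - by rewrite card_unit.
  - split.
    + by move=> [] [] [] []; rewrite eqxx mulr1.
    + by move=> _ _; rewrite (s1 sinv).
    + by rewrite (big_pred1 tt) // => [[]].
  - by move=> _ _ l _ q _; rewrite mul1r mulr1.
have [I [E [cI msE comE]]] := IH (ltnW kn).
have [e [eQ eR es esum]] := HE (Ordinal kn).
exists (I * bool)%type, (fun p q : I * bool => E p.1 q.1 * e p.2 q.2); split.
- by rewrite card_prod card_bool cI expnSr.
- apply: msys_glue => // i j a b.
  by apply: (comE _ _ (Ordinal kn)) => //; exact: eQ.
- move=> [i a] [j b] l kl q qQ /=.
  have kl' : Ordinal kn != l.
    by apply/eqP => e0; move: kl; rewrite -e0 /= ltnn.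
  rewrite -mulrA (Hc kl' (eQ a b) qQ) mulrA (comE i j l (ltnW kl) q qQ).
  by rewrite mulrA.
Qed.

End GlueQ.

Lemma mxDZ (F : fieldType) d (a : F) (M N : 'M[F]_d) i j : (a *: M + N) i j = a * M i j + N i j.
Proof. by rewrite !mxE. Qed.
Lemma mxT (F : fieldType) d (M : 'M[F]_d) i j : (M^T) i j = M j i.
Proof. by rewrite !mxE. Qed.
Lemma mx1E (F : fieldType) d (i j : 'I_d) : (1%:M : 'M[F]_d) i j = (i == j)%:R.
Proof. by rewrite !mxE. Qed.
Lemma mxME (F : fieldType) d (M N : 'M[F]_d) i j : (M *m N) i j = \sum_k M i k * N k j.
Proof. by rewrite !mxE. Qed.

Section Iso.
Variables (F : fieldType) (A : falgType F) (s : A -> A).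
Hypothesis sinv : involution_first_kind s.
Variables (I : finType) (E : I -> I -> A) (d : nat).
Hypothesis cI : #|I| = d.
Hypothesis dA : \dim (fullv : {vspace A}) = (d ^ 2)%N.
Hypothesis HE : msys s E.

Definition hI (i : 'I_d) : I := enum_val (cast_ord (esym cI) i).
Definition hI' (x : I) : 'I_d := cast_ord cI (enum_rank x).
Lemma hIK : cancel hI hI'.
Proof. by move=> i; rewrite /hI /hI' enum_valK cast_ordKV. Qed.
Lemma hIK' : cancel hI' hI.
Proof. by move=> x; rewrite /hI /hI' cast_ordK enum_rankK. Qed.
Lemma hI_inj : injective hI. Proof. exact: can_inj hIK. Qed.
Lemma hI_bij : bijective hI. Proof. by exists hI'; [exact: hIK | exact: hIK']. Qed.

Let Eh i j := E (hI i) (hI j).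

Lemma ER' i j k l : Eh i j * Eh k l = (if j == k then Eh i l else 0).
Proof. by case: HE => H _ _; rewrite /Eh H (inj_eq hI_inj). Qed.
Lemma Es' i j : s (Eh i j) = Eh j i.
Proof. by case: HE => _ H _; rewrite /Eh H. Qed.
Lemma Esum' : \sum_(i < d) Eh i i = 1.
Proof.
case: HE => _ _ H; rewrite -H (reindex hI) //; exact: onW_bij hI_bij.
Qed.

Lemma aux1 (J : finType) (j0 : J) (c : J -> F) (X : J -> A) :
  \sum_j c j *: (if j == j0 then X j else 0) = c j0 *: X j0.
Proof.
rewrite (bigD1 j0) //= eqxx big1 ?addr0 // => j /negbTE ->; exact: scaler0.
Qed.

Definition gmx (M : 'M[F]_d) : A := \sum_i \sum_j M i j *: Eh i j.


Lemma gmx_lin : linear gmx.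
Proof.
move=> a M N; rewrite /gmx scaler_sumr -big_split; apply: eq_bigr => i _ /=.
rewrite scaler_sumr -big_split; apply: eq_bigr => j _ /=.
by rewrite mxDZ scalerDl scalerA.
Qed.

Lemma gM M N : gmx (M *m N) = gmx M * gmx N.
Proof.
rewrite /gmx mulr_suml; apply: eq_bigr => i _; rewrite mulr_suml.
under eq_bigr do rewrite mxE scaler_suml.
rewrite exchange_big; apply: eq_bigr => j _ /=.
rewrite mulr_sumr.
under [RHS]eq_bigr do rewrite mulr_sumr.
under [RHS]eq_bigr do under eq_bigr do rewrite -scalerAl -scalerAr scalerA ER'.
rewrite exchange_big /=; apply: eq_bigr => l _.
by rewrite -(aux1 j (fun k => M i j * N k l) (fun _ => Eh i l)); apply: eq_bigr => k _; rewrite eq_sym.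
Qed.

Lemma g1 : gmx 1%:M = 1.
Proof.
rewrite /gmx -Esum'; apply: eq_bigr => i _.
under eq_bigr do rewrite mxE.
rewrite (bigD1 i) //= eqxx scale1r big1 ?addr0 // => j ji.
by rewrite eq_sym (negbTE ji) scale0r.
Qed.

Lemma gT M : gmx M^T = s (gmx M).
Proof.
rewrite /gmx (sum_s sinv); under [RHS]eq_bigr do rewrite (sum_s sinv).
rewrite [RHS]exchange_big; apply: eq_bigr => i _; apply: eq_bigr => j _.
by rewrite mxT (sZ sinv) Es'.
Qed.

Lemma gsand M a b : Eh a a * gmx M * Eh b b = M a b *: Eh a b.
Proof.
have R : gmx M * Eh b b = \sum_i M i b *: Eh i b.
  rewrite /gmx mulr_suml; apply: eq_bigr => i _; rewrite mulr_suml.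
  under eq_bigr do rewrite -scalerAl ER'.
  exact: (aux1 b (fun j => M i j) (fun _ => Eh i b)).
rewrite -mulrA R mulr_sumr.
under eq_bigr do rewrite -scalerAr ER' eq_sym.
exact: (aux1 a (fun i => M i b) (fun _ => Eh a b)).
Qed.

Lemma Eh_neq0 a b : Eh a b != 0.
Proof.
apply/negP => /eqP ab0.
have aa0 : Eh a a = 0 by have := ER' a b b a; rewrite eqxx ab0 mul0r => <-.
have cc0 c : Eh c c = 0.
  have : Eh c a * Eh a a * Eh a c = Eh c c by rewrite ER' eqxx ER' eqxx.
  by rewrite aa0 mulr0 mul0r => <-.
have := Esum'; rewrite big1 => [/esym/eqP|i _]; [by rewrite oner_eq0 | exact: cc0].
Qed.

Lemma g_inj : injective gmx.
Proof.
move=> M N eMN; apply/matrixP => a b.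
have := gsand M a b; rewrite eMN gsand => /eqP; rewrite -subr_eq0 -scalerBl scaler_eq0.
by rewrite (negbTE (Eh_neq0 a b)) orbF subr_eq0 => /eqP.
Qed.

Definition gmxf : 'M[F]_d -> A := gmx.
HB.instance Definition _ := GRing.isLinear.Build F 'M[F]_d A *:%R gmxf gmx_lin.
Definition gL : 'Hom('M[F]_d, A) := linfun gmxf.
Lemma gLE M : gL M = gmx M. Proof. by rewrite /gL lfunE. Qed.

Lemma g_surj x : exists M, gmx M == x.
Proof.
have k0 : lker gL == 0%VS by apply/lker0P => M N; rewrite !gLE; exact: g_inj.
have dimI : \dim (gL @: fullv)%VS = \dim (fullv : {vspace A}).
  rewrite limg_dim_eq ?(eqP k0) ?capv0 // dimvf dim_matrix dA.
  by rewrite expnS expn1.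
have full : (gL @: fullv)%VS = fullv.
  by apply/eqP; rewrite eqEdim subvf dimI leqnn.
have : x \in (gL @: fullv)%VS by rewrite full memvf.
by case/memv_imgP => M _ ->; exists M; rewrite gLE.
Qed.

Lemma iso_final : iso_to_transpose s d.
Proof.
pose f x := xchoose (g_surj x).
have fK x : gmx (f x) = x by apply/eqP; exact: (xchooseP (g_surj x)).
have gK M : f (gmx M) = M by apply: g_inj; rewrite fK.
exists f; split; first by exists gmx.
split.
- by move=> x y; apply: g_inj; rewrite fK -gLE linearD /= !gLE !fK.
- by move=> c x; apply: g_inj; rewrite fK -gLE linearZ /= !gLE !fK.
- by move=> x y; apply: g_inj; rewrite gM !fK.
- by apply: g_inj; rewrite g1 fK.
- by move=> x; apply: g_inj; rewrite gT !fK.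
Qed.


End Iso.


Unset Implicit Arguments.

Theorem lemma6p1 (F : fieldType) (A : falgType F) (sigma : A -> A) (n : nat) :
  (2 \in [pchar F])%N ->
  central_simple A ->
  degree A (2 ^ n) ->
  involution_first_kind sigma ->
  orthogonal_char2 sigma ->
  totally_decomposable sigma n ->
  (2 <= n)%N ->
  ~ iso_to_transpose sigma (2 ^ n) ->
  exists w u : A,
    [/\ Sym sigma w /\ ~ (exists a (c : F), Alt sigma a /\ w = a + c%:A),
        Alt sigma u,
        u \is a GRing.unit,
        (exists c : F, [/\ c != 0, u ^+ 2 = c%:A & ~ (exists d : F, c = d ^+ 2)]) &
        u * w = w * u].
Proof.
move=> ch2 _ deg sinv horth [Q [HQ Hc gen]] n2 niso.
have dA : \dim (fullv : {vspace A}) = (4 ^ n)%N.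
  by rewrite deg -expnM mulnC expnM.
case: (classic (exists i, exists u y c, [/\ y \in Q i, u = sigma y + y, c != 0,
          u * u = c%:A & ~ (exists d : F, c = d ^+ 2)])); last first.
  move=> Hn; exfalso; apply: niso.
  have HE : forall i, exists e : bool -> bool -> A,
    [/\ forall a b, e a b \in Q i,
        forall a b c d, e a b * e c d = (if b == c then e a d else 0),
        forall a b, sigma (e a b) = e b a & e false false + e true true = 1].
    move=> i; case: (quat_dich ch2 sinv horth (HQ i)) => // H1.
    by exfalso; apply: Hn; exists i.
  have [I [E [cI msE _]]] := glue_all sinv Hc HE (leqnn n).
  exact: (iso_final sinv cI deg msE).
case=> i [u [y [c [yQ eu c0 uu nsq]]]].
have n0 : (0 < n)%N by apply: leq_trans n2.
have n1 : (1 < n)%N by [].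
have [j ji] : exists j : 'I_n, j != i.
  case: (eqVneq i (Ordinal n0)) => [ei|ni]; last by exists (Ordinal n0); rewrite eq_sym.
  by exists (Ordinal n1); rewrite ei.
have [w [mu [wQ sw lmu mw [m1 mus]]]] := quat_w ch2 sinv horth (HQ j).
have [C [C1 sC CC full dC]] := caseA_split sinv HQ Hc j gen dA.
have n1A : (1 : A) \notin (tL sigma @: fullv)%VS.
  apply/negP => /memv_imgP [z _ e]; apply: horth; apply/(AltE sigma ch2).
  by exists z; rewrite e (tLE sinv).
have [ka [lka k1 kA]] := sepf n1A.
have kas x : ka (sigma x) = ka x.
  have e : sigma x = tL sigma x + x by rewrite (tLE sinv) -addrA (addxx ch2) addr0.
  by rewrite e (islinD lka) kA ?add0r // memv_img ?memvf.
have [la [lla laUV]] := bilin lmu lka dC.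
have las x : la (sigma x) = la x.
  apply: (prodv_ext (U := Q j) (V := C) (f := fun x => la (sigma x)) (g := la)).
  - by move=> a x0 y0; rewrite (sD sinv) (sZ sinv) lla.
  - exact: lla.
  - move=> a b aQ bC; rewrite (sM sinv).
    have saQ : sigma a \in Q j by case: (HQ j) => _ [_ H]; apply: H.
    have sbC : sigma b \in C by apply: sC.
    have -> : sigma b * sigma a = sigma a * sigma b.
      by move/centvsP: CC => /(_ _ _ sbC saQ).
    by rewrite laUV // (mus a aQ) (kas b) laUV.
  - by rewrite full memvf.
have la1 : la 1 = 0 by rewrite -[1](mulr1 1) laUV // ?m1 ?mul0r //; case: (HQ j) => [[[H _] _] _]; rewrite memvE.
exists w, u; split.
- split => //.
  move=> [a [c' [[y' ->] ew]]].
  have : la w = 1 by rewrite -[w]mulr1 laUV // mw k1 mul1r.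
  rewrite ew (islinD lla) (islinD lla) (islinN lla) las subrr add0r.
  by rewrite (islinZ lla) la1 mulr0 => /eqP; rewrite eq_sym oner_eq0.
- by exists y; rewrite eu (oppxx ch2).
- apply/unitrP; exists (c^-1 *: u).
  by rewrite -scalerAl -scalerAr uu scalerA mulVf // scale1r.
- by exists c; split => //; rewrite expr2.
- have uQ : u \in Q i by rewrite eu memvD //; case: (HQ i) => _ [_ H]; apply: H.
  by apply: Hc uQ wQ; rewrite eq_sym.
Qed.
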